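(* Let $S$ and $T$ be left inverse semi-braces, $\sigma:T\to\mathrm{Aut}(S)$ a homomorphism from $(T,\cdot)$ into the automorphism group of the left inverse semi-brace $S$ (write ${}^ua=\sigma(u)(a)$), and $\delta:S\to\mathrm{End}(T)$ an anti-homomorphism from $(S,+)$ into the endomorphism semigroup of $(T,+)$ (write $u^a=\delta(a)(u)$). Suppose that $$(uv)^{\lambda_a({}^ub)}+u\left((u^{-1})^b+w\right)=u\left(v^b+w\right)$$ for all $a,b\in S$ and $u,v,w\in T$. Then $S\times T$ with $$(a,u)+(b,v)=(a+b,\,u^b+v),\qquad (a,u)(b,v)=(a\,{}^ub,\,uv)$$ for all $(a,u),(b,v)\in S\times T$ is a left inverse semi-brace (the double semidirect product of $S$ and $T$ via $\sigma$ and $\delta$).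
   Context: An inverse semigroup is a semigroup $(S,\cdot)$ in which for each $a$ there is a unique $a^{-1}$ with $aa^{-1}a=a$, $a^{-1}aa^{-1}=a^{-1}$. A left inverse semi-brace is a triple $(S,+,\cdot)$ with $(S,+)$ a semigroup, $(S,\cdot)$ an inverse semigroup and $a(b+c)=ab+a(a^{-1}+c)$ for all $a,b,c$; set $\lambda_a(b)=a(a^{-1}+b)$. An automorphism of the left inverse semi-brace $S$ is a bijection preserving both operations. That $\delta$ is an anti-homomorphism from $(S,+)$ means $\delta(a+b)=\delta(b)\circ\delta(a)$, i.e. $u^{a+b}=(u^a)^b$. *)

(* Defs.v *)
Definition associative {S : Type} (op : S -> S -> S) : Prop :=
  forall a b c, op a (op b c) = op (op a b) c.

Definition is_inverse {S : Type} (mul : S -> S -> S) (a b : S) : Prop :=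
  mul (mul a b) a = a /\ mul (mul b a) b = b.

Definition inverse_semigroup {S : Type} (mul : S -> S -> S) : Prop :=
  associative mul /\
  forall a, exists b, is_inverse mul a b /\ forall b', is_inverse mul a b' -> b' = b.

Definition left_inverse_semi_brace {S : Type} (add mul : S -> S -> S) : Prop :=
  associative add /\ inverse_semigroup mul /\
  forall a a' b c, is_inverse mul a a' ->
    mul a (add b c) = add (mul a b) (mul a (add a' c)).

Definition bijective {A B : Type} (f : A -> B) : Prop :=
  (forall x y, f x = f y -> x = y) /\ (forall y, exists x, f x = y).

Definition semi_brace_automorphism {S : Type} (add mul : S -> S -> S) (f : S -> S) : Prop :=
  bijective f /\
  (forall a b, f (add a b) = add (f a) (f b)) /\
  (forall a b, f (mul a b) = mul (f a) (f b)).

Definition add_endomorphism {T : Type} (add : T -> T -> T) (f : T -> T) : Prop :=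
  forall u v, f (add u v) = add (f u) (f v).

Definition lambda {S : Type} (add mul : S -> S -> S) (inv : S -> S) (a b : S) : S :=
  mul a (add (inv a) b).

Definition dsp_add {S T : Type} (addS : S -> S -> S) (addT : T -> T -> T)
  (delta : S -> T -> T) (x y : S * T) : S * T :=
  (addS (fst x) (fst y), addT (delta (fst y) (snd x)) (snd y)).

Definition dsp_mul {S T : Type} (mulS : S -> S -> S) (mulT : T -> T -> T)
  (sigma : T -> S -> S) (x y : S * T) : S * T :=
  (mulS (fst x) (sigma (snd x) (fst y)), mulT (snd x) (snd y)).

(* Main.v *)
Require Import Defs.

Theorem theorem38 (S T : Type)
  (addS mulS : S -> S -> S) (invS : S -> S)
  (addT mulT : T -> T -> T) (invT : T -> T)
  (sigma : T -> S -> S) (delta : S -> T -> T)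
  (HS : left_inverse_semi_brace addS mulS)
  (HT : left_inverse_semi_brace addT mulT)
  (HinvS : forall a, is_inverse mulS a (invS a))
  (HinvT : forall u, is_inverse mulT u (invT u))
  (Hsigma_aut : forall u, semi_brace_automorphism addS mulS (sigma u))
  (Hsigma_hom : forall u v a, sigma (mulT u v) a = sigma u (sigma v a))
  (Hdelta_end : forall a, add_endomorphism addT (delta a))
  (Hdelta_anti : forall a b u, delta (addS a b) u = delta b (delta a u))
  (Hcomp : forall (a b : S) (u v w : T),
     addT (delta (lambda addS mulS invS a (sigma u b)) (mulT u v))
          (mulT u (addT (delta b (invT u)) w))
     = mulT u (addT (delta b v) w)) :
  left_inverse_semi_brace (dsp_add addS addT delta) (dsp_mul mulS mulT sigma).
Proof.
  destruct HS as [HaS [[HmS HuS] HbS]].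
  destruct HT as [HaT [[HmT HuT] HbT]].
  unfold associative in *.
  unfold add_endomorphism in Hdelta_end.
  assert (sadd : forall u a b, sigma u (addS a b) = addS (sigma u a) (sigma u b))
    by (intros u; apply (Hsigma_aut u)).
  assert (smul : forall u a b, sigma u (mulS a b) = mulS (sigma u a) (sigma u b))
    by (intros u; apply (Hsigma_aut u)).
  assert (uniqS : forall a b, is_inverse mulS a b -> b = invS a).
  { intros a b H. destruct (HuS a) as [b0 [_ H0]].
    rewrite (H0 b H), (H0 _ (HinvS a)). reflexivity. }
  assert (uniqT : forall a b, is_inverse mulT a b -> b = invT a).
  { intros a b H. destruct (HuT a) as [b0 [_ H0]].
    rewrite (H0 b H), (H0 _ (HinvT a)). reflexivity. }
  assert (sid : forall e a, mulT e e = e -> sigma e a = a).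
  { intros e a He. destruct (Hsigma_aut e) as [[Hinj _] _]. apply Hinj.
    rewrite <- Hsigma_hom, He. reflexivity. }
  assert (idem1 : forall u, mulT (mulT u (invT u)) (mulT u (invT u)) = mulT u (invT u)).
  { intros u. destruct (HinvT u) as [H1 H2]. rewrite HmT, H1. reflexivity. }
  assert (idem2 : forall u, mulT (mulT (invT u) u) (mulT (invT u) u) = mulT (invT u) u).
  { intros u. destruct (HinvT u) as [H1 H2]. rewrite HmT, H2. reflexivity. }
  assert (s1 : forall u a, sigma u (sigma (invT u) a) = a).
  { intros u a. rewrite <- Hsigma_hom. apply sid, idem1. }
  assert (s2 : forall u a, sigma (invT u) (sigma u a) = a).
  { intros u a. rewrite <- Hsigma_hom. apply sid, idem2. }
  assert (uniqP : forall a u y w, is_inverse (dsp_mul mulS mulT sigma) (a, u) (y, w) ->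
            (y, w) = (sigma (invT u) (invS a), invT u)).
  { intros a u y w [H1 H2]. destruct (HinvS a) as [A1 A2]. destruct (HinvT u) as [U1 U2].
        injection H1 as H1a H1b. injection H2 as H2a H2b.
        assert (Hw : w = invT u) by (apply uniqT; split; assumption).
        subst w.
        rewrite Hsigma_hom, s1 in H1a.
        rewrite Hsigma_hom, s2 in H2a.
        assert (Hy : sigma u y = invS a).
        { apply uniqS. split. exact H1a.
          transitivity (sigma u (mulS (mulS y (sigma (invT u) a)) y)).
          - rewrite !smul, s1. reflexivity.
          - rewrite H2a. reflexivity. }
        rewrite <- Hy, s2. reflexivity.
  }
  split; [|split].
  - intros [a u] [b v] [c w]. unfold dsp_add; simpl.
    rewrite Hdelta_anti, Hdelta_end, HaS, HaT. reflexivity.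
  - split.
    + intros [a u] [b v] [c w]. unfold dsp_mul; simpl.
      rewrite Hsigma_hom, smul, HmS, HmT. reflexivity.
    + intros [a u]. exists (sigma (invT u) (invS a), invT u).
      destruct (HinvS a) as [A1 A2]. destruct (HinvT u) as [U1 U2].
      split.
      * unfold is_inverse, dsp_mul; simpl. split.
        -- rewrite s1, Hsigma_hom, s1, A1, U1. reflexivity.
        -- rewrite Hsigma_hom, s2, <- !smul, A2, U2. reflexivity.
      * intros [y w] Hyw. apply uniqP; exact Hyw.
  - intros [a u] [a' u'] [b v] [c w] Hinv.
    assert (Hx : (a', u') = (sigma (invT u) (invS a), invT u)).
    { apply uniqP; exact Hinv. }
    injection Hx as Ha' Hu'. subst a' u'.
    unfold dsp_mul, dsp_add; simpl.
    rewrite !sadd, s1. f_equal.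
    + apply HbS, HinvS.
    + rewrite <- (Hcomp a c u v w). reflexivity.
Qed.
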